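(* Let $\mathcal{C}$ be a division Cayley algebra over a field $\mathbb{F}$. Then every local automorphism of $\mathcal{C}$ is a $2$-local automorphism, and hence the set of local automorphisms of $\mathcal{C}$ equals the set of $2$-local automorphisms of $\mathcal{C}$.
   Context: A Cayley (octonion) algebra over $\mathbb{F}$ is a unital nonassociative algebra $\mathcal{C}$ of dimension $8$ over $\mathbb{F}$ endowed with a quadratic form $\mathrm{n}:\mathcal{C}\to\mathbb{F}$ (the norm) such that $\mathrm{n}(xy)=\mathrm{n}(x)\mathrm{n}(y)$ for all $x,y$ and whose polar form $\mathrm{n}(x,y)=\mathrm{n}(x+y)-\mathrm{n}(x)-\mathrm{n}(y)$ is nondegenerate; it is a division Cayley algebra if it is a division algebra (equivalently $\mathrm{n}$ is anisotropic). A linear map $\psi:\mathcal{C}\to\mathcal{C}$ is a local automorphism if for every $x\in\mathcal{C}$ there is an automorphism $\varphi_x$ of $\mathcal{C}$ with $\psi(x)=\varphi_x(x)$. A map $\Delta:\mathcal{C}\to\mathcal{C}$ (not assumed linear) is a $2$-local automorphism if for every pair $x,y\in\mathcal{C}$ there is an automorphism $\varphi_{x,y}$ of $\mathcal{C}$ with $\Delta(x)=\varphi_{x,y}(x)$ and $\Delta(y)=\varphi_{x,y}(y)$. *)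

(* Defs.v *)
From HB Require Import structures.
From mathcomp Require Import all_boot all_order all_algebra.
Set Implicit Arguments. Unset Strict Implicit. Unset Printing Implicit Defensive.
Import GRing.Theory.
Local Open Scope ring_scope.

(* A (nonassociative) algebra structure on a finite-dimensional F-vector
   space V is given by a multiplication mul : V -> V -> V. *)

Definition bilinear_mul (F : fieldType) (V : vectType F) (mul : V -> V -> V) : Prop :=
  (forall (a : F) (x y z : V), mul (a *: x + y) z = a *: mul x z + mul y z) /\
  (forall (a : F) (x y z : V), mul z (a *: x + y) = a *: mul z x + mul z y).

Definition polar (F : fieldType) (V : vectType F) (n : V -> F) (x y : V) : F :=
  n (x + y) - n x - n y.

Definition quadratic_form (F : fieldType) (V : vectType F) (n : V -> F) : Prop :=
  (forall (a : F) (x : V), n (a *: x) = a ^+ 2 * n x) /\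
  (forall (a : F) (x y z : V), polar n (a *: x + y) z = a * polar n x z + polar n y z) /\
  (forall (a : F) (x y z : V), polar n z (a *: x + y) = a * polar n z x + polar n z y).

Definition nondegenerate_polar (F : fieldType) (V : vectType F) (n : V -> F) : Prop :=
  forall x : V, (forall y : V, polar n x y = 0) -> x = 0.

Definition cayley_algebra (F : fieldType) (V : vectType F)
    (mul : V -> V -> V) (one : V) (n : V -> F) : Prop :=
  [/\ \dim {: V} = 8%N /\ bilinear_mul mul,
      (forall x : V, mul one x = x /\ mul x one = x),
      quadratic_form n,
      (forall x y : V, n (mul x y) = n x * n y)
    & nondegenerate_polar n].

Definition division_algebra (F : fieldType) (V : vectType F) (mul : V -> V -> V) : Prop :=
  forall a : V, a != 0 -> bijective (mul a) /\ bijective (fun x => mul x a).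

Definition division_cayley_algebra (F : fieldType) (V : vectType F)
    (mul : V -> V -> V) (one : V) (n : V -> F) : Prop :=
  cayley_algebra mul one n /\ division_algebra mul.

Definition linear_map (F : fieldType) (V : vectType F) (f : V -> V) : Prop :=
  forall (a : F) (x y : V), f (a *: x + y) = a *: f x + f y.

Definition automorphism (F : fieldType) (V : vectType F) (mul : V -> V -> V)
    (phi : V -> V) : Prop :=
  [/\ linear_map phi, bijective phi & forall x y : V, phi (mul x y) = mul (phi x) (phi y)].

Definition local_automorphism (F : fieldType) (V : vectType F) (mul : V -> V -> V)
    (psi : V -> V) : Prop :=
  linear_map psi /\
  forall x : V, exists phi : V -> V, automorphism mul phi /\ psi x = phi x.

Definition two_local_automorphism (F : fieldType) (V : vectType F) (mul : V -> V -> V)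
    (D : V -> V) : Prop :=
  forall x y : V, exists phi : V -> V,
    [/\ automorphism mul phi, D x = phi x & D y = phi y].

(* Main.v *)
Require Import Defs.
From HB Require Import structures.
From mathcomp Require Import all_boot all_order all_algebra.
From mathcomp Require Import ring.
From Stdlib Require Import Classical.
Set Implicit Arguments. Unset Strict Implicit. Unset Printing Implicit Defensive.
Import GRing.Theory.
Local Open Scope ring_scope.

Section Cayley.
Variables (F : fieldType) (V : vectType F) (mul : V -> V -> V) (one : V) (nrm : V -> F).
Hypothesis bil : bilinear_mul mul.
Hypothesis unitP : forall x : V, mul one x = x /\ mul x one = x.
Hypothesis qf : quadratic_form nrm.
Hypothesis nmul : forall x y : V, nrm (mul x y) = nrm x * nrm y.
Hypothesis nondeg : nondegenerate_polar nrm.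
Hypothesis dim8 : \dim {: V} = 8%N.
Hypothesis divis : division_algebra mul.

Local Notation "x ** y" := (mul x y) (at level 40, left associativity).
Local Notation p := (polar nrm).

Lemma bil1 a x y z : mul (a *: x + y) z = a *: mul x z + mul y z.
Proof. by case: bil. Qed.
Lemma bil2 a x y z : mul z (a *: x + y) = a *: mul z x + mul z y.
Proof. by case: bil. Qed.
Lemma qf1 a x : nrm (a *: x) = a ^+ 2 * nrm x. Proof. by case: qf. Qed.
Lemma qf2 a x y z : p (a *: x + y) z = a * p x z + p y z. Proof. by case: qf => _ []. Qed.
Lemma qf3 a x y z : p z (a *: x + y) = a * p z x + p z y. Proof. by case: qf => _ []. Qed.
Lemma m1l x : one ** x = x. Proof. by case: (unitP x). Qed.
Lemma m1r x : x ** one = x. Proof. by case: (unitP x). Qed.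

Lemma self_add (M : zmodType) (a : M) : a = a + a -> a = 0.
Proof. by move=> h; have := congr1 (fun z => z - a) h; rewrite subrr addrK. Qed.
Lemma m0l x : 0 ** x = 0.
Proof. by apply: (@self_add V); have := bil1 1 0 0 x; rewrite !scale1r addr0. Qed.
Lemma m0r x : x ** 0 = 0.
Proof. by apply: (@self_add V); have := bil2 1 0 0 x; rewrite !scale1r addr0. Qed.
Lemma mDl x y z : (x + y) ** z = x ** z + y ** z.
Proof. by have := bil1 1 x y z; rewrite !scale1r. Qed.
Lemma mDr x y z : z ** (x + y) = z ** x + z ** y.
Proof. by have := bil2 1 x y z; rewrite !scale1r. Qed.
Lemma mZl a x z : (a *: x) ** z = a *: (x ** z).
Proof. by have := bil1 a x 0 z; rewrite !addr0 m0l addr0. Qed.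
Lemma mZr a x z : z ** (a *: x) = a *: (z ** x).
Proof. by have := bil2 a x 0 z; rewrite !addr0 m0r addr0. Qed.
Lemma mNl x z : (- x) ** z = - (x ** z).
Proof. by rewrite -scaleN1r mZl scaleN1r. Qed.
Lemma mNr x z : z ** (- x) = - (z ** x).
Proof. by rewrite -scaleN1r mZr scaleN1r. Qed.
Lemma mBl x y z : (x - y) ** z = x ** z - y ** z.
Proof. by rewrite mDl mNl. Qed.
Lemma mBr x y z : z ** (x - y) = z ** x - z ** y.
Proof. by rewrite mDr mNr. Qed.

Lemma nZ a x : nrm (a *: x) = a ^+ 2 * nrm x. Proof. exact: qf1. Qed.
Lemma n0 : nrm 0 = 0. Proof. by rewrite -(scale0r 0) nZ expr2 !mul0r. Qed.
Lemma nN x : nrm (- x) = nrm x. Proof. by rewrite -scaleN1r nZ sqrrN expr1n mul1r. Qed.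
Lemma nD x y : nrm (x + y) = nrm x + nrm y + p x y.
Proof. rewrite /polar; ring. Qed.
Lemma pC x y : p x y = p y x.
Proof. by rewrite /polar [y + x]addrC; ring. Qed.
Lemma pDl x y z : p (x + y) z = p x z + p y z.
Proof. by have := qf2 1 x y z; rewrite scale1r mul1r. Qed.
Lemma pDr x y z : p z (x + y) = p z x + p z y.
Proof. by have := qf3 1 x y z; rewrite scale1r mul1r. Qed.
Lemma p0l z : p 0 z = 0.
Proof. by apply: (@self_add F); have := pDl 0 0 z; rewrite addr0. Qed.
Lemma p0r z : p z 0 = 0. Proof. by rewrite pC p0l. Qed.
Lemma pZl a x z : p (a *: x) z = a * p x z.
Proof. by have := qf2 a x 0 z; rewrite !addr0 p0l addr0. Qed.
Lemma pZr a x z : p z (a *: x) = a * p z x.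
Proof. by rewrite pC pZl pC. Qed.
Lemma pNl x z : p (- x) z = - p x z. Proof. by rewrite -scaleN1r pZl mulN1r. Qed.
Lemma pNr x z : p z (- x) = - p z x. Proof. by rewrite pC pNl pC. Qed.
Lemma pBl x y z : p (x - y) z = p x z - p y z. Proof. by rewrite pDl pNl. Qed.
Lemma pBr x y z : p z (x - y) = p z x - p z y. Proof. by rewrite pDr pNr. Qed.
Lemma pxx x : p x x = 2 * nrm x.
Proof.
rewrite /polar -{1 2}(scale1r x) -scalerDl nZ; ring.
Qed.

Lemma eq_polar a b : (forall z, p a z = p b z) -> a = b.
Proof.
move=> H; apply/eqP; rewrite -subr_eq0; apply/eqP/nondeg => y.
by rewrite pBl H subrr.
Qed.

Lemma exists_nonzero : exists x : V, x != 0.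
Proof.
exists (vpick fullv); rewrite vpick0 -dimv_eq0 dim8 //.
Qed.

Lemma eq_from (a b c d : F) : c = d -> a - b = c - d -> a = b.
Proof. by move=> h e; apply/eqP; rewrite -subr_eq0 e h subrr. Qed.

Ltac vring := let w := fresh "w" in apply: eq_polar => w;
  rewrite ?(pDl, pBl, pNl, pZl, p0l); ring.
Ltac vsolve h := let w := fresh "w" in let hh := fresh "hh" in
  apply: eq_polar => w; move: (congr1 (fun v => p v w) h) => /= hh;
  rewrite ?(pDl, pBl, pNl, pZl, p0l) in hh *;
  first [apply: (eq_from hh); ring | apply: (eq_from (esym hh)); ring].

Lemma n1 : nrm one = 1.
Proof.
have h := nmul one one; rewrite m1l in h.
have [h0|h0] := eqVneq (nrm one) 0.
  have nz z : nrm z = 0 by rewrite -(m1r z) nmul h0 mulr0.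
  case: exists_nonzero => x0 hx; exfalso; move/negP: hx; apply; apply/eqP/nondeg => y.
  by rewrite /polar !nz !subr0.
exact: (mulfI h0 (etrans (esym h) (esym (mulr1 _)))).
Qed.
Lemma one_neq0 : one != 0.
Proof. by apply/eqP => h; move: n1; rewrite h n0 => /eqP; rewrite eq_sym oner_eq0. Qed.
Lemma p11 : p one one = 2. Proof. by rewrite pxx n1 mulr1. Qed.

Definition t x := p x one.
Fact conj_key : unit. Proof. exact: tt. Qed.
Definition conj x := locked_with conj_key (t x *: one - x).
Lemma conjE x : conj x = t x *: one - x. Proof. by rewrite /conj unlock. Qed.

Lemma C1 x y z : p (x ** y) (x ** z) = nrm x * p y z.
Proof. have h := nmul x (y + z); rewrite mDr !nD !nmul in h; apply: (eq_from h); ring. Qed.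
Lemma C2 x y z : p (y ** x) (z ** x) = nrm x * p y z.
Proof. have h := nmul (y + z) x; rewrite mDl !nD !nmul in h; apply: (eq_from h); ring. Qed.
Lemma C3 x w y z : p (x ** y) (w ** z) + p (w ** y) (x ** z) = p x w * p y z.
Proof.
have h := C1 (x + w) y z; rewrite !mDl !pDl !pDr !C1 nD in h; apply: (eq_from h); ring.
Qed.
Lemma C4 x w y z : p (y ** x) (z ** w) + p (y ** w) (z ** x) = p x w * p y z.
Proof.
have h := C2 (x + w) y z; rewrite !mDr !pDl !pDr !C2 nD in h; apply: (eq_from h); ring.
Qed.

Lemma sqr x : x ** x = t x *: x - nrm x *: one.
Proof.
apply: eq_polar => z; rewrite pBl !pZl.
have h1 := C3 x one x z; rewrite !m1l in h1.
have h2 := C1 x one z; rewrite m1r in h2; rewrite h2 in h1.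
by apply: (eq_from h1); rewrite /t; ring.
Qed.

Lemma A1 x y z : p (x ** y) z = p y (conj x ** z).
Proof.
rewrite conjE mBl mZl m1l pBr pZr.
have h := C3 x one y z; rewrite !m1l in h; apply: (eq_from h); rewrite /t; ring.
Qed.
Lemma A2 x y z : p (y ** x) z = p y (z ** conj x).
Proof.
rewrite conjE mBr mZr m1r pBr pZr.
have h := C4 x one y z; rewrite !m1r in h; apply: (eq_from h); rewrite /t; ring.
Qed.

Lemma tD x y : t (x + y) = t x + t y. Proof. exact: pDl. Qed.
Lemma tZ a x : t (a *: x) = a * t x. Proof. exact: pZl. Qed.
Lemma tN x : t (- x) = - t x. Proof. exact: pNl. Qed.
Lemma tB x y : t (x - y) = t x - t y. Proof. exact: pBl. Qed.
Lemma t1 : t one = 2. Proof. exact: p11. Qed.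
Lemma t_conj x : t (conj x) = t x.
Proof. by rewrite conjE tB tZ t1; ring. Qed.
Lemma conjK x : conj (conj x) = x.
Proof. by rewrite {1}conjE t_conj conjE opprB addrC subrK. Qed.
Lemma conjD x y : conj (x + y) = conj x + conj y.
Proof. rewrite !conjE tD scalerDl; vring. Qed.
Lemma conjZ a x : conj (a *: x) = a *: conj x.
Proof. rewrite !conjE tZ -scalerA scalerBr //. Qed.
Lemma conjN x : conj (- x) = - conj x.
Proof. by rewrite -scaleN1r conjZ scaleN1r. Qed.
Lemma conjB x y : conj (x - y) = conj x - conj y.
Proof. by rewrite conjD conjN. Qed.
Lemma conj1 : conj one = one.
Proof. rewrite conjE t1; vring. Qed.
Lemma conj0 : conj 0 = 0.
Proof. by rewrite conjE /t p0l scale0r subr0. Qed.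

Lemma LM x y : conj x ** (x ** y) = nrm x *: y.
Proof. apply: eq_polar => z; by rewrite A1 conjK C1 pZl. Qed.
Lemma RM x y : (y ** x) ** conj x = nrm x *: y.
Proof. apply: eq_polar => z; by rewrite A2 conjK C2 pZl. Qed.
Lemma LM2 x z y : conj x ** (z ** y) + conj z ** (x ** y) = p x z *: y.
Proof.
have h := LM (x + z) y; rewrite conjD !mDl !mDr !LM nD in h; vsolve h.
Qed.
Lemma RM2 x z y : (y ** x) ** conj z + (y ** z) ** conj x = p x z *: y.
Proof.
have h := RM (x + z) y; rewrite conjD !mDr !mDl !RM nD in h; vsolve h.
Qed.
Lemma Q2 x y : x ** y + y ** x = t x *: y + t y *: x - p x y *: one.
Proof.
have h := sqr (x + y); rewrite mDl !mDr !sqr tD nD in h; vsolve h.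
Qed.
Lemma TXY x y : t (x ** y) = t x * t y - p x y.
Proof. rewrite /t A1 m1r conjE pBr pZr /t (pC y x); ring. Qed.
Lemma conjM x y : conj (x ** y) = conj y ** conj x.
Proof.
rewrite (conjE y) (conjE x) mBl mZl !m1l mBr mZr m1r conjE TXY.
have h := Q2 x y; vsolve h.
Qed.
Lemma mconj x : x ** conj x = nrm x *: one.
Proof. by have := RM x one; rewrite m1l. Qed.
Lemma conjm x : conj x ** x = nrm x *: one.
Proof. by have := LM x one; rewrite m1r. Qed.

Lemma aniso x : nrm x = 0 -> x = 0.
Proof.
move=> hx; apply/eqP; apply/negPn/negP => hx0.
have [g gK _] := (divis hx0).1.
have h : mul x (conj x) = mul x 0 by rewrite mconj m0r hx scale0r.
have := congr1 g h; rewrite !gK => hc.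
by move/negP: hx0; apply; rewrite -(conjK x) hc conj0.
Qed.

Lemma rcancel u b : u != 0 -> b ** u = 0 -> b = 0.
Proof.
move=> hu hb; have := RM u b; rewrite hb m0l => /esym/eqP.
rewrite scaler_eq0 => /orP[/eqP /aniso hu0|/eqP //].
by move/negP: hu; rewrite hu0 eqxx.
Qed.

Section LinMap.
Variable phi : V -> V.
Hypothesis hl : linear_map phi.
Lemma lin0 : phi 0 = 0.
Proof. by apply: (@self_add V); have := hl 1 0 0; rewrite !scale1r addr0. Qed.
Lemma linD x y : phi (x + y) = phi x + phi y.
Proof. by have := hl 1 x y; rewrite !scale1r. Qed.
Lemma linZ a x : phi (a *: x) = a *: phi x.
Proof. by have := hl a x 0; rewrite !addr0 lin0 addr0. Qed.
Lemma linN x : phi (- x) = - phi x.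
Proof. by rewrite -scaleN1r linZ scaleN1r. Qed.
Lemma linB x y : phi (x - y) = phi x - phi y.
Proof. by rewrite linD linN. Qed.
End LinMap.

Definition subalg (D : V -> Prop) :=
  [/\ D one, (forall a x y, D x -> D y -> D (a *: x + y)) & (forall x y, D x -> D y -> D (x ** y))].
Definition orth (D : V -> Prop) u := forall d, D d -> p u d = 0.

Section Sub.
Variable D : V -> Prop.
Hypothesis hD : subalg D.
Lemma sub1 : D one. Proof. by case: hD. Qed.
Lemma subL a x y : D x -> D y -> D (a *: x + y). Proof. by case: hD => _ h _; apply: h. Qed.
Lemma subM x y : D x -> D y -> D (x ** y). Proof. by case: hD => _ _ h; apply: h. Qed.
Lemma sub0 : D 0.
Proof. by have := subL (-1) sub1 sub1; rewrite scaleN1r addNr. Qed.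
Lemma subD x y : D x -> D y -> D (x + y).
Proof. by move=> hx hy; have := subL 1 hx hy; rewrite scale1r. Qed.
Lemma subZ a x : D x -> D (a *: x).
Proof. by move=> hx; have := subL a hx sub0; rewrite addr0. Qed.
Lemma subN x : D x -> D (- x).
Proof. by move=> hx; rewrite -scaleN1r; apply: subZ. Qed.
Lemma subB x y : D x -> D y -> D (x - y).
Proof. by move=> hx hy; apply: subD => //; apply: subN. Qed.
Lemma subC x : D x -> D (conj x).
Proof. by move=> hx; rewrite conjE; apply: subB => //; apply: subZ; apply: sub1. Qed.

Variable u : V.
Hypothesis hu : orth D u.
Lemma tu0 : t u = 0. Proof. exact: hu sub1. Qed.
Lemma conju : conj u = - u. Proof. by rewrite conjE tu0 scale0r sub0r. Qed.
Lemma orthL d : D d -> orth D (d ** u).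
Proof. by move=> hd c hc; rewrite A1 hu //; apply: subM => //; apply: subC. Qed.
Lemma orthR d : D d -> orth D (u ** d).
Proof. by move=> hd c hc; rewrite A2 hu //; apply: subM => //; apply: subC. Qed.
End Sub.

Lemma I0 D u a : subalg D -> orth D u -> D a -> u ** a = conj a ** u.
Proof.
move=> hD hu ha; have h := Q2 a u.
rewrite (tu0 hD hu) scale0r addr0 pC (hu _ ha) scale0r subr0 in h.
rewrite conjE mBl mZl m1l; vsolve h.
Qed.

Lemma I1 D u a d : subalg D -> orth D u -> D a -> D d -> a ** (d ** u) = (d ** a) ** u.
Proof.
move=> hD hu ha hd; have h := RM2 a (- u) d.
rewrite conjN (conju hD hu) opprK mNr mNl pNr pC (hu _ ha) oppr0 scale0r in h.
rewrite (I0 hD (orthL hD hu hd) (subC hD ha)) conjK in h.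
by apply/eqP; rewrite eq_sym -subr_eq0 h.
Qed.

Lemma I2 D u b c : subalg D -> orth D u -> D c -> (b ** u) ** c = (b ** conj c) ** u.
Proof.
move=> hD hu hc; have h := RM2 u (conj c) b.
rewrite conjK (conju hD hu) mNr (hu _ (subC hD hc)) scale0r in h.
by apply/eqP; rewrite -subr_eq0 h.
Qed.

Lemma I3 D u b d : subalg D -> orth D u -> D b -> D d ->
  (b ** u) ** (d ** u) = - (nrm u *: (conj d ** b)).
Proof.
move=> hD hu hb hd; have h := LM2 (- (b ** u)) d u.
have hbu : conj (b ** u) = - (b ** u) by rewrite (conju hD (orthL hD hu hb)).
have h2 : (- (b ** u)) ** u = nrm u *: b.
  by rewrite mNl -mNr -(conju hD hu) RM.
rewrite conjN hbu opprK h2 mZr pNl (orthL hD hu hb hd) oppr0 scale0r in h.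
by apply/eqP; rewrite -subr_eq0 opprK h.
Qed.

Lemma CD D u a b c d : subalg D -> orth D u -> D a -> D b -> D c -> D d ->
  (a + b ** u) ** (c + d ** u) =
  (a ** c - nrm u *: (conj d ** b)) + (d ** a + b ** conj c) ** u.
Proof.
move=> hD hu ha hb hc hd.
rewrite !mDl !mDr (I1 hD hu ha hd) (I2 b hD hu hc) (I3 hD hu hb hd).
vring.
Qed.

Lemma lin_conj phi : linear_map phi -> phi one = one ->
  forall a, t (phi a) = t a -> phi (conj a) = conj (phi a).
Proof. by move=> hl h1 a ht; rewrite !conjE (linB hl) (linZ hl) h1 ht. Qed.

Lemma ext (D D' : V -> Prop) (phi : V -> V) u u' :
  subalg D -> subalg D' -> orth D u -> orth D' u' -> nrm u' = nrm u ->
  linear_map phi -> phi one = one ->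
  (forall a, D a -> D' (phi a)) ->
  (forall a b, D a -> D b -> phi (a ** b) = phi a ** phi b) ->
  (forall a, D a -> t (phi a) = t a) ->
  (forall b, D b -> phi (b ** u) = phi b ** u') ->
  forall a b c d, D a -> D b -> D c -> D d ->
  phi ((a + b ** u) ** (c + d ** u)) = phi (a + b ** u) ** phi (c + d ** u).
Proof.
move=> hD hD' hu hu' hn hl h1 hDD hm ht hU a b c d ha hb hc hd.
have hc' := fun x (hx : D x) => lin_conj hl h1 (ht x hx).
have Dcd := subC hD hd; have Dcc := subC hD hc.
have e1 : phi (a + b ** u) = phi a + phi b ** u' by rewrite (linD hl) hU.
have e2 : phi (c + d ** u) = phi c + phi d ** u' by rewrite (linD hl) hU.
rewrite e1 e2 (CD hD' hu' (hDD _ ha) (hDD _ hb) (hDD _ hc) (hDD _ hd)).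
rewrite (CD hD hu ha hb hc hd) (linD hl) (hU _ (subD hD (subM hD hd ha) (subM hD hb Dcc))).
rewrite (linB hl) (linZ hl) (hm _ _ ha hc) (hm _ _ Dcd hb) (linD hl) (hm _ _ hd ha).
by rewrite (hm _ _ hb Dcc) (hc' _ hd) (hc' _ hc) hn.
Qed.

Definition iso (T : V -> V) := linear_map T /\ forall z, nrm (T z) = nrm z.

Lemma iso_p T : iso T -> forall x y, p (T x) (T y) = p x y.
Proof. by case=> hl hn x y; rewrite /polar -(linD hl) !hn. Qed.

Definition refl a z := z - (p z a / nrm a) *: a.

Lemma refl_lin a : linear_map (refl a).
Proof. by move=> c x y; rewrite /refl qf2; vring. Qed.

Lemma refl_iso a : nrm a != 0 -> iso (refl a).
Proof.
move=> ha; split; first exact: refl_lin.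
move=> z; rewrite /refl nD nN nZ pNr pZr.
by rewrite expr2 -mulrA mulfVK // addrK.
Qed.

Lemma refl_fix a z : p z a = 0 -> refl a z = z.
Proof. by move=> h; rewrite /refl h mul0r scale0r subr0. Qed.

Lemma refl_swap g f : nrm g = nrm f -> g != f -> refl (g - f) g = f.
Proof.
move=> hn hgf.
have ha : nrm (g - f) != 0.
  by apply/eqP => /aniso /eqP; rewrite subr_eq0; apply/negP.
have e : p g (g - f) = nrm (g - f).
  by rewrite pBr pxx nD nN pNr -hn; ring.
by rewrite /refl e divff // scale1r opprB addrC subrK.
Qed.

Lemma witt k (e f : nat -> V) :
  (forall i j, (i < k)%N -> (j < k)%N -> p (e i) (e j) = p (f i) (f j)) ->
  (forall i, (i < k)%N -> nrm (e i) = nrm (f i)) ->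
  exists T, iso T /\ forall i, (i < k)%N -> T (e i) = f i.
Proof.
elim: k => [|k IH] hp hn.
  by exists id; split => //; split => // c x y.
have [T [hT hTe]] : exists T, iso T /\ forall i, (i < k)%N -> T (e i) = f i.
  by apply: IH => [i j hi hj|i hi]; [apply: hp; apply: ltnW..|apply: hn; apply: ltnW].
have [hg|hg] := eqVneq (T (e k)) (f k).
  exists T; split => // i; rewrite ltnS leq_eqVlt => /orP[/eqP->//|]; exact: hTe.
have hng : nrm (T (e k)) = nrm (f k) by rewrite hT.2 hn.
have ha : nrm (T (e k) - f k) != 0.
  by apply/eqP => /aniso /eqP; rewrite subr_eq0; apply/negP.
exists (fun z => refl (T (e k) - f k) (T z)); split.
  split; first by move=> c x y; rewrite (hT.1 c x y) refl_lin.
  by move=> z; rewrite (refl_iso ha).2 hT.2.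
move=> i; rewrite ltnS leq_eqVlt => /orP[/eqP->|hi]; first exact: refl_swap.
rewrite (hTe i hi) refl_fix // pBr -{1}(hTe i hi) (iso_p hT) hp ?subrr //.
exact: ltnW.
Qed.

Definition E4 x y (i : nat) := nth 0 [:: one; x; y; x ** y] i.
Definition G4 (nx ny tx ty pxy : F) (i j : nat) : F :=
  match i, j with
  | 0, 0 => 2 | 0, 1 => tx | 0, 2 => ty | 0, 3 => tx * ty - pxy
  | 1, 0 => tx | 1, 1 => 2 * nx | 1, 2 => pxy | 1, 3 => nx * ty
  | 2, 0 => ty | 2, 1 => pxy | 2, 2 => 2 * ny | 2, 3 => ny * tx
  | 3, 0 => tx * ty - pxy | 3, 1 => nx * ty | 3, 2 => ny * tx | 3, 3 => 2 * (nx * ny)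
  | _, _ => 0 end.
Definition N4 (nx ny : F) (i : nat) : F :=
  match i with 0 => 1 | 1 => nx | 2 => ny | _ => nx * ny end.

Lemma pxxy x y : p x (x ** y) = nrm x * t y.
Proof. by rewrite -{1}(m1r x) C1 pC. Qed.
Lemma pyxy x y : p y (x ** y) = nrm y * t x.
Proof. by rewrite -{1}(m1l y) C2 pC. Qed.

Lemma gram4 x y i j : (i < 4)%N -> (j < 4)%N ->
  p (E4 x y i) (E4 x y j) = G4 (nrm x) (nrm y) (t x) (t y) (p x y) i j.
Proof.
case: i => [|[|[|[|i]]]] // _; case: j => [|[|[|[|j]]]] // _;
  rewrite /E4 /G4 /=.
all: try by rewrite ?p11 ?pxx ?nmul.
all: try by rewrite (pC one).
all: try by rewrite -/(t _) ?TXY.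
all: try by rewrite (pC one) -/(t _) ?TXY.
all: try by rewrite ?pxxy ?pyxy.
all: try by rewrite pC ?pxxy ?pyxy.
all: by rewrite pC.
Qed.

Lemma norm4 x y i : (i < 4)%N -> nrm (E4 x y i) = N4 (nrm x) (nrm y) i.
Proof. by case: i => [|[|[|[|i]]]] // _; rewrite /E4 /= ?n1 ?nmul. Qed.

Lemma W4 x y x' y' : nrm x' = nrm x -> nrm y' = nrm y -> t x' = t x -> t y' = t y ->
  p x' y' = p x y ->
  exists T, [/\ iso T, T one = one, T x = x', T y = y' & T (x ** y) = x' ** y'].
Proof.
move=> hnx hny htx hty hp.
have [T [hT he]] : exists T, iso T /\ forall i, (i < 4)%N -> T (E4 x y i) = E4 x' y' i.
  apply: witt => [i j hi hj|i hi]; first by rewrite !gram4 // hnx hny htx hty hp.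
  by rewrite !norm4 // hnx hny.
by exists T; split => //; [apply: (he 0%N)|apply: (he 1%N)|apply: (he 2%N)|apply: (he 3%N)].
Qed.

Lemma p_sum z (I : finType) (c : I -> F) (X : I -> V) :
  p z (\sum_i c i *: X i) = \sum_i c i * p z (X i).
Proof.
apply: (big_rec2 (fun a b => p z b = a)); first by rewrite p0r.
by move=> i a b _ <-; rewrite pDr pZr.
Qed.

Lemma fun_sum (f : V -> F) (I : finType) (c : I -> F) (X : I -> V) :
  (forall a x y, f (a *: x + y) = a * f x + f y) ->
  f (\sum_i c i *: X i) = \sum_i c i * f (X i).
Proof.
move=> hf; have f0 : f 0 = 0.
  by apply: (@self_add F); have := hf 1 0 0; rewrite scale1r addr0 mul1r.
apply: (big_rec2 (fun a b => f b = a)) => // i a b _ <-.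
by rewrite hf.
Qed.

Lemma riesz (f : V -> F) : (forall a x y, f (a *: x + y) = a * f x + f y) ->
  exists z, forall s, p z s = f s.
Proof.
move=> hf.
pose X := vbasis (fullv : {vspace V}).
pose L (z : V) : 'rV[F]_(\dim (fullv : {vspace V})) := \row_i p z X`_i.
have linL : linear L.
  by move=> a x y; apply/rowP => i; rewrite !mxE qf2.
pose LM := GRing.isLinear.Build _ _ _ _ L linL.
pose LL : {linear _ -> _} := HB.pack L LM.
have hker : lker (linfun LL) == 0%VS.
  apply/lker0P => x y; rewrite !lfunE /= => hxy.
  apply/eqP; rewrite -subr_eq0; apply/eqP/nondeg => s.
  have hs : s \in <<X>>%VS by rewrite (span_basis (vbasisP fullv)) memvf.
  rewrite (coord_span hs) p_sum; apply: big1 => i _.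
  have := congr1 (fun r : 'rV[F]_(\dim (fullv : {vspace V})) => r 0 i) hxy; rewrite /L !mxE pBl => ->.
  by rewrite subrr mulr0.
have himg : limg (linfun LL) = fullv.
  apply/eqP; rewrite eqEdim subvf limg_dim_eq; last by rewrite (eqP hker) capv0.
  by rewrite [X in (X <= _)%N]dimvf dim_matrix mul1r leqnn.
have : (\row_i f X`_i) \in limg (linfun LL) by rewrite himg memvf.
case/memv_imgP => z _; rewrite lfunE /= => hz.
exists z => s.
have hs : s \in <<X>>%VS by rewrite (span_basis (vbasisP fullv)) memvf.
rewrite (coord_span hs) p_sum (fun_sum _ _ hf); apply: eq_bigr => i _.
by have := congr1 (fun r : 'rV[F]_(\dim (fullv : {vspace V})) => r 0 i) hz; rewrite /L !mxE => <-.
Qed.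

Lemma nondeg_ex x : x != 0 -> exists c, p x c != 0.
Proof.
move=> hx; apply: NNPP => hn; move/negP: hx; apply; apply/eqP/nondeg => y.
by apply/eqP; apply: contraT => hy; exfalso; apply: hn; exists y.
Qed.

Lemma perpP (U : {vspace V}) b : b \notin U ->
  exists z, (forall a, a \in U -> p z a = 0) /\ p z b != 0.
Proof.
move=> hb.
pose h s := s - projv U s.
have hh a x y : h (a *: x + y) = a *: h x + h y.
  by rewrite /h linearD linearZ /=; vring.
have hb0 : h b != 0.
  apply/eqP => /eqP; rewrite subr_eq0 => /eqP hb1.
  by move/negP: hb; apply; rewrite hb1 memv_proj.
have [c hc] := nondeg_ex hb0.
have [z hz] : exists z, forall s, p z s = p (h s) c.
  by apply: riesz => a x y; rewrite hh qf2.
exists z; split; last by rewrite hz.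
by move=> a ha; rewrite hz /h projv_id // subrr p0l.
Qed.

Lemma perp_nonzero (X : seq V) : (size X < 8)%N ->
  exists z, z != 0 /\ forall a, a \in X -> p z a = 0.
Proof.
move=> hX.
have [b hb] : exists b, b \notin <<X>>%VS.
  apply: NNPP => hn.
  have hsub : (fullv <= <<X>>)%VS.
    apply/subvP => b _; apply: NNPP => hb; apply: hn; exists b; exact/negP.
  have := dimvS hsub; rewrite dimvf -dimvf dim8 => h8.
  by have := leq_trans h8 (dim_span X); rewrite leqNgt hX.
have [z [hz1 hz2]] := perpP hb.
exists z; split.
  by apply/eqP => hz0; move: hz2; rewrite hz0 p0l eqxx.
by move=> a ha; apply: hz1; apply: memv_span.
Qed.

Definition DK w z := exists a b : F, z = a *: one + b *: w.
Definition Dbl (D : V -> Prop) u z := exists a b, [/\ D a, D b & z = a + b ** u].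
Definition nd (D : V -> Prop) := forall a, D a -> (forall d, D d -> p a d = 0) -> a = 0.
Definition Dl w := 4%:R * nrm w - t w ^+ 2.

Lemma DK_subalg w : subalg (DK w).
Proof.
split.
- by exists 1, 0; rewrite scale1r scale0r addr0.
- move=> c x y [x0 [x1 ->]] [y0 [y1 ->]].
  by exists (c * x0 + y0), (c * x1 + y1); vring.
- move=> x y [x0 [x1 ->]] [y0 [y1 ->]].
  exists (x0 * y0 - x1 * y1 * nrm w), (x0 * y1 + x1 * y0 + x1 * y1 * t w).
  rewrite !mDl !mDr !mZl !mZr !m1l !m1r sqr; vring.
Qed.

Lemma Dbl_subalg D u : subalg D -> orth D u -> subalg (Dbl D u).
Proof.
move=> hD hu; split.
- by exists one, 0; split; [apply: sub1|apply: sub0|rewrite m0l addr0].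
- move=> c x y [a [b [ha hb ->]]] [a' [b' [ha' hb' ->]]].
  exists (c *: a + a'), (c *: b + b'); split; try by apply: (subL hD).
  by rewrite mDl mZl; vring.
- move=> x y [a [b [ha hb ->]]] [c [d [hc hd ->]]].
  rewrite (CD hD hu ha hb hc hd).
  exists (a ** c - nrm u *: (conj d ** b)), (d ** a + b ** conj c); split => //.
  + apply: (subB hD); [apply: (subM hD)|apply: (subZ hD); apply: (subM hD)] => //; exact: (subC hD).
  + apply: (subD hD); apply: (subM hD) => //; exact: (subC hD).
Qed.

Lemma Dbl_orth D u u2 : subalg D -> orth D u2 -> (forall d, D d -> p u2 (d ** u) = 0) ->
  orth (Dbl D u) u2.
Proof. by move=> hD h1 h2 z [a [b [ha hb ->]]]; rewrite pDr h1 // h2 // addr0. Qed.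

Lemma Dbl_incl D u a : subalg D -> D a -> Dbl D u a.
Proof. by move=> hD ha; exists a, 0; split => //; [apply: sub0|rewrite m0l addr0]. Qed.

Lemma Dbl_free D u : subalg D -> nd D -> orth D u -> nrm u != 0 ->
  forall a b, D a -> D b -> a + b ** u = 0 -> a = 0 /\ b = 0.
Proof.
move=> hD hnd hu hnu a b ha hb h.
have ea : a = - (b ** u) by apply/eqP; rewrite -subr_eq0 opprK h.
have a0 : a = 0.
  apply: hnd => // d hd; rewrite ea pNl (orthL hD hu hb hd) oppr0 //.
split => //; move: h; rewrite a0 add0r; apply: rcancel.
by apply/eqP => hu0; move/negP: hnu; apply; rewrite hu0 n0.
Qed.

Lemma Dbl_nd D u : subalg D -> nd D -> orth D u -> nrm u != 0 -> nd (Dbl D u).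
Proof.
move=> hD hnd hu hnu z [a [b [ha hb ->]]] hz.
have a0 : a = 0.
  apply: hnd => // d hd; have := hz d (Dbl_incl u hD hd).
  by rewrite pDl (orthL hD hu hb hd) addr0.
have b0 : b = 0.
  apply: hnd => // d hd.
  have := hz (d ** u) (ex_intro _ 0 (ex_intro _ d (And3 (sub0 hD) hd (esym (add0r _))))).
  rewrite pDl a0 p0l add0r C2 => /eqP; rewrite mulf_eq0 (negbTE hnu) /= => /eqP //.
by rewrite a0 b0 m0l addr0.
Qed.

Lemma DK_coef w a b : Dl w != 0 -> p (a *: one + b *: w) one = 0 ->
  p (a *: one + b *: w) w = 0 -> a = 0 /\ b = 0.
Proof.
move=> hD; rewrite !pDl !pZl p11 -/(t w) (pC one w) -/(t w) pxx => e1 e2.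
have hb : b * Dl w = 0.
  have -> : b * Dl w = 2 * (a * t w + b * (2 * nrm w)) - t w * (a * 2 + b * t w).
    by rewrite /Dl; ring.
  by rewrite e1 e2; ring.
have ha : a * Dl w = 0.
  have -> : a * Dl w = 2 * nrm w * (a * 2 + b * t w) - t w * (a * t w + b * (2 * nrm w)).
    by rewrite /Dl; ring.
  by rewrite e1 e2; ring.
move/eqP: ha; rewrite mulf_eq0 (negbTE hD) orbF => /eqP a0.
move/eqP: hb; rewrite mulf_eq0 (negbTE hD) orbF => /eqP b0.
by [].
Qed.

Lemma DK_nd w : Dl w != 0 -> nd (DK w).
Proof.
move=> hD z [a [b ->]] hz.
have hw : DK w w by exists 0, 1; rewrite scale0r scale1r add0r.
have [-> ->] := DK_coef hD (hz one (sub1 (DK_subalg w))) (hz w hw).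
by rewrite !scale0r addr0.
Qed.

Definition QA w v (a0 a1 a2 a3 : F) :=
  (a0 *: one + a1 *: w) + (a2 *: one + a3 *: w) ** v.
Definition X8 w v u : 8.-tuple V :=
  [tuple one; w; v; w ** v; u; w ** u; v ** u; (w ** v) ** u].

Lemma comb8 w v u (c : nat -> F) :
  \sum_(i < 8) c i *: (X8 w v u)`_i =
  QA w v (c 0%N) (c 1%N) (c 2%N) (c 3%N) + QA w v (c 4%N) (c 5%N) (c 6%N) (c 7%N) ** u.
Proof.
rewrite !big_ord_recl big_ord0 /= /bump /= /QA !mDl !mZl !m1l; vring.
Qed.

Lemma DK_orth w x : p x one = 0 -> p x w = 0 -> orth (DK w) x.
Proof. by move=> h1 h2 z [a [b ->]]; rewrite pDr !pZr h1 h2 !mulr0 addr0. Qed.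

Lemma QA_in w v a0 a1 a2 a3 : Dbl (DK w) v (QA w v a0 a1 a2 a3).
Proof. by exists (a0 *: one + a1 *: w), (a2 *: one + a3 *: w); split => //; [exists a0, a1|exists a2, a3]. Qed.

Lemma QD_QA w v z : Dbl (DK w) v z -> exists a0 a1 a2 a3, z = QA w v a0 a1 a2 a3.
Proof. by case=> [k1 [k2 [[a0 [a1 ->]] [a2 [a3 ->]] ->]]]; exists a0, a1, a2, a3. Qed.

Section Frame.
Variables w v u : V.
Hypotheses (hDl : Dl w != 0) (hv1 : p v one = 0) (hvw : p v w = 0) (hnv : nrm v != 0).
Hypotheses (hu1 : p u one = 0) (huw : p u w = 0) (huv : p u v = 0) (huwv : p u (w ** v) = 0).
Hypothesis (hnu : nrm u != 0).

Lemma orth_Kv : orth (DK w) v. Proof. exact: DK_orth. Qed.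
Lemma QD_sub : subalg (Dbl (DK w) v). Proof. exact: Dbl_subalg (DK_subalg w) orth_Kv. Qed.
Lemma QD_nd : nd (Dbl (DK w) v).
Proof. exact: Dbl_nd (DK_subalg w) (DK_nd hDl) orth_Kv hnv. Qed.
Lemma orth_Qu : orth (Dbl (DK w) v) u.
Proof.
apply: Dbl_orth; first exact: DK_subalg.
  exact: DK_orth.
by move=> d [a [b ->]]; rewrite mDl !mZl m1l pDr !pZr huv huwv !mulr0 addr0.
Qed.

Lemma QA0 a0 a1 a2 a3 : QA w v a0 a1 a2 a3 = 0 -> [/\ a0 = 0, a1 = 0, a2 = 0 & a3 = 0].
Proof.
move=> h.
have [k1 k2] := Dbl_free (DK_subalg w) (DK_nd hDl) orth_Kv hnv
  (ex_intro _ a0 (ex_intro _ a1 erefl)) (ex_intro _ a2 (ex_intro _ a3 erefl)) h.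
have [e0 e1] : a0 = 0 /\ a1 = 0 by apply: (DK_coef hDl); rewrite k1 p0l.
have [e2 e3] : a2 = 0 /\ a3 = 0 by apply: (DK_coef hDl); rewrite k2 p0l.
by split.
Qed.

Lemma X8free : free (X8 w v u).
Proof.
apply/freeP => k hk i.
pose c (j : nat) := k (inord j).
have hc : \sum_(i < 8) c i *: (X8 w v u)`_i = 0.
  by rewrite -[RHS]hk; apply: eq_bigr => j _; rewrite /c inord_val.
rewrite comb8 in hc.
have [h1 h2] := Dbl_free QD_sub QD_nd orth_Qu hnu (QA_in _ _ _ _ _ _) (QA_in _ _ _ _ _ _) hc.
have [e0 e1 e2 e3] := QA0 h1; have [e4 e5 e6 e7] := QA0 h2.
rewrite -(inord_val i); case: i => [[|[|[|[|[|[|[|[|i]]]]]]]] hi] //=.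
Qed.

Lemma X8span : <<X8 w v u>>%VS = fullv.
Proof.
apply/eqP; rewrite eqEdim subvf /=.
by move: X8free; rewrite /free => /eqP ->; rewrite dim8 size_tuple.
Qed.

Lemma X8coord z : z = \sum_(i < 8) coord (X8 w v u) i z *: (X8 w v u)`_i.
Proof. by apply: coord_span; rewrite X8span memvf. Qed.
End Frame.

Lemma QA_exp w v a0 a1 a2 a3 :
  QA w v a0 a1 a2 a3 = a0 *: one + a1 *: w + a2 *: v + a3 *: (w ** v).
Proof. rewrite /QA mDl !mZl m1l; vring. Qed.
Lemma QAu_exp w v u a0 a1 a2 a3 :
  QA w v a0 a1 a2 a3 ** u = a0 *: u + a1 *: (w ** u) + a2 *: (v ** u) + a3 *: ((w ** v) ** u).
Proof. rewrite QA_exp !mDl !mZl m1l; vring. Qed.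
Lemma DKmul w a0 a1 b0 b1 :
  (a0 *: one + a1 *: w) ** (b0 *: one + b1 *: w) =
  (a0 * b0 - a1 * b1 * nrm w) *: one + (a0 * b1 + a1 * b0 + a1 * b1 * t w) *: w.
Proof. rewrite !mDl !mDr !mZl !mZr !m1l !m1r sqr; vring. Qed.
Lemma tQA w v a0 a1 a2 a3 : p v one = 0 -> p v w = 0 ->
  t (QA w v a0 a1 a2 a3) = a0 * 2 + a1 * t w.
Proof.
move=> h1 h2; rewrite /QA !tD !tZ t1 /t A1 m1r.
have hc : DK w (conj (a2 *: one + a3 *: w)) by apply: (subC (DK_subalg w)); exists a2, a3.
by rewrite (DK_orth h1 h2 hc) addr0.
Qed.

Section G.
Variables w v u w' v' u' : V.
Hypotheses (hDl : Dl w != 0) (hv1 : p v one = 0) (hvw : p v w = 0) (hnv0 : nrm v != 0).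
Hypotheses (hu1 : p u one = 0) (huw : p u w = 0) (huv : p u v = 0) (huwv : p u (w ** v) = 0).
Hypothesis (hnu0 : nrm u != 0).
Hypotheses (htw : t w' = t w) (hnw : nrm w' = nrm w).
Hypotheses (hv1' : p v' one = 0) (hvw' : p v' w' = 0) (hnv : nrm v' = nrm v).
Hypotheses (hu1' : p u' one = 0) (huw' : p u' w' = 0) (huv' : p u' v' = 0) (huwv' : p u' (w' ** v') = 0).
Hypothesis (hnu : nrm u' = nrm u).

Let hDl' : Dl w' != 0. Proof. by rewrite /Dl htw hnw. Qed.
Let hnv0' : nrm v' != 0. Proof. by rewrite hnv. Qed.
Let hnu0' : nrm u' != 0. Proof. by rewrite hnu. Qed.

Lemma G_aut : exists phi, [/\ automorphism mul phi, phi w = w', phi v = v' & phi u = u'].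
Proof.
pose X := X8 w v u; pose Y := X8 w' v' u'.
have fX : free X by apply: X8free.
have fY : free Y by apply: X8free.
have [f hf] := linear_of_free X Y.
have [g hg] := linear_of_free Y X.
have hmf : map f X = Y by apply: hf => //; rewrite !size_tuple.
have hmg : map g Y = X by apply: hg => //; rewrite !size_tuple.
have fXi i : (i < 8)%N -> f X`_i = Y`_i.
  by move=> hi; rewrite -(nth_map 0 0 f) ?size_tuple // hmf.
have gYi i : (i < 8)%N -> g Y`_i = X`_i.
  by move=> hi; rewrite -(nth_map 0 0 g) ?size_tuple // hmg.
have f1 : f one = one by apply: (fXi 0%N).
have fw : f w = w' by apply: (fXi 1%N).
have fv : f v = v' by apply: (fXi 2%N).
have fwv : f (w ** v) = w' ** v' by apply: (fXi 3%N).
have fu : f u = u' by apply: (fXi 4%N).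
have fwu : f (w ** u) = w' ** u' by apply: (fXi 5%N).
have fvu : f (v ** u) = v' ** u' by apply: (fXi 6%N).
have fwvu : f ((w ** v) ** u) = (w' ** v') ** u' by apply: (fXi 7%N).
have flin : linear_map f by move=> a x y; rewrite linearP.
have fQA a0 a1 a2 a3 : f (QA w v a0 a1 a2 a3) = QA w' v' a0 a1 a2 a3.
  by rewrite !QA_exp !linearD !linearZ /= f1 fw fv fwv.
have fQAu a0 a1 a2 a3 : f (QA w v a0 a1 a2 a3 ** u) = QA w' v' a0 a1 a2 a3 ** u'.
  by rewrite !QAu_exp !linearD !linearZ /= fu fwu fvu fwvu.
have fK a0 a1 : f (a0 *: one + a1 *: w) = a0 *: one + a1 *: w'.
  by rewrite linearD !linearZ /= f1 fw.
(* first extension: K -> Q *)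
have ext1 := @ext (DK w) (DK w') f v v' (DK_subalg w) (DK_subalg w') (orth_Kv hv1 hvw)
  (orth_Kv hv1' hvw') hnv flin f1.
have ext1' : forall a b c d, DK w a -> DK w b -> DK w c -> DK w d ->
    f ((a + b ** v) ** (c + d ** v)) = f (a + b ** v) ** f (c + d ** v).
  apply: ext1.
  - by move=> a [a0 [a1 ->]]; rewrite fK; exists a0, a1.
  - by move=> a b [a0 [a1 ->]] [b0 [b1 ->]]; rewrite !fK !DKmul fK htw hnw.
  - by move=> a [a0 [a1 ->]]; rewrite fK !tD !tZ t1 htw.
  - move=> b [a0 [a1 ->]].
    have e : forall w v, (a0 *: one + a1 *: w) ** v = QA w v 0 0 a0 a1.
      by move=> ? ?; rewrite /QA !scale0r !add0r.
    by rewrite !e fQA fK.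
have ext2 := @ext (Dbl (DK w) v) (Dbl (DK w') v') f u u' (QD_sub hv1 hvw) (QD_sub hv1' hvw')
  (orth_Qu hu1 huw huv huwv) (orth_Qu hu1' huw' huv' huwv') hnu flin f1.
have ext2' : forall a b c d, Dbl (DK w) v a -> Dbl (DK w) v b -> Dbl (DK w) v c -> Dbl (DK w) v d ->
    f ((a + b ** u) ** (c + d ** u)) = f (a + b ** u) ** f (c + d ** u).
  apply: ext2.
  - by move=> a /QD_QA [a0 [a1 [a2 [a3 ->]]]]; rewrite fQA; apply: QA_in.
  - move=> a b [k1 [k2 [h1 h2 ->]]] [k3 [k4 [h3 h4 ->]]]; exact: ext1'.
  - by move=> a /QD_QA [a0 [a1 [a2 [a3 ->]]]]; rewrite fQA !tQA // htw.
  - by move=> b /QD_QA [a0 [a1 [a2 [a3 ->]]]]; rewrite fQA fQAu.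
have decomp z : exists a b, [/\ Dbl (DK w) v a, Dbl (DK w) v b & z = a + b ** u].
  pose c (j : nat) := coord X (inord j) z.
  have hz : z = \sum_(i < 8) c i *: X`_i.
    rewrite {1}(X8coord hDl hv1 hvw hnv0 hu1 huw huv huwv hnu0 z).
    by apply: eq_bigr => j _; rewrite /c inord_val.
  rewrite hz comb8; eexists; eexists; split; [apply: QA_in|apply: QA_in|reflexivity].
have fsum (c : 'I_8 -> F) : f (\sum_(i < 8) c i *: X`_i) = \sum_(i < 8) c i *: Y`_i.
  by rewrite linear_sum; apply: eq_bigr => i _; rewrite linearZ /= fXi.
have gsum (c : 'I_8 -> F) : g (\sum_(i < 8) c i *: Y`_i) = \sum_(i < 8) c i *: X`_i.
  by rewrite linear_sum; apply: eq_bigr => i _; rewrite linearZ /= gYi.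
exists f; split => //; split => //.
- exists g => z.
    by rewrite {1}(X8coord hDl hv1 hvw hnv0 hu1 huw huv huwv hnu0 z) fsum gsum -X8coord.
  by rewrite {1}(X8coord hDl' hv1' hvw' hnv0' hu1' huw' huv' huwv' hnu0' z) gsum fsum -X8coord.
- move=> x y.
  have [a [b [ha hb ->]]] := decomp x; have [c [d [hc hd ->]]] := decomp y.
  exact: ext2'.
Qed.
End G.

Lemma aut_lin phi : automorphism mul phi -> linear_map phi.
Proof. by case. Qed.
Lemma aut_mul phi : automorphism mul phi -> forall x y, phi (x ** y) = phi x ** phi y.
Proof. by case. Qed.

Lemma aut_one phi : automorphism mul phi -> phi one = one.
Proof.
case=> hl [g gK Kg] hm.
have h z : phi one ** z = z by rewrite -(Kg z) -hm m1l.
by rewrite -(m1r (phi one)) h.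
Qed.

Lemma aut_nt phi : automorphism mul phi -> forall x, t (phi x) = t x /\ nrm (phi x) = nrm x.
Proof.
move=> ha x; have hl := aut_lin ha; have h1 := aut_one ha.
have e1 := sqr (phi x).
have e2 : phi x ** phi x = t x *: phi x - nrm x *: one.
  by rewrite -(aut_mul ha) sqr (linB hl) !(linZ hl) h1.
have e : (t (phi x) - t x) *: phi x = (nrm (phi x) - nrm x) *: one.
  have e3 := etrans (esym e1) e2; vsolve e3.
have [hc|hc] := eqVneq (t (phi x) - t x) 0.
  have hd : (nrm (phi x) - nrm x) *: one = 0 by rewrite -e hc scale0r.
  move/eqP: hd; rewrite scaler_eq0 (negbTE one_neq0) orbF subr_eq0 => /eqP ->.
  by move/eqP: hc; rewrite subr_eq0 => /eqP ->.
set k := (nrm (phi x) - nrm x) / (t (phi x) - t x).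
have ex : phi x = k *: one.
  by rewrite /k mulrC -scalerA -e scalerA mulVf // scale1r.
case: ha => _ [g gK _] _.
have xe : x = k *: one.
  by apply: (can_inj gK); rewrite (linZ hl) h1 -ex.
exfalso; move/eqP: hc; apply.
by rewrite ex [in t x]xe subrr.
Qed.

Lemma aut_p phi : automorphism mul phi -> forall x y, p (phi x) (phi y) = p x y.
Proof.
move=> ha x y; apply: iso_p; split; first exact: aut_lin.
by move=> z; case: (aut_nt ha z).
Qed.

Lemma GQ w v w' v' :
  Dl w != 0 -> p v one = 0 -> p v w = 0 -> nrm v != 0 ->
  t w' = t w -> nrm w' = nrm w -> p v' one = 0 -> p v' w' = 0 -> nrm v' = nrm v ->
  exists phi, [/\ automorphism mul phi, phi w = w' & phi v = v'].
Proof.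
move=> hDl hv1 hvw hnv0 htw hnw hv1' hvw' hnv.
have [u [hu0 hu]] := @perp_nonzero [:: one; w; v; w ** v] isT.
have hu1 : p u one = 0 by apply: hu; rewrite !inE eqxx.
have huw : p u w = 0 by apply: hu; rewrite !inE eqxx !orbT.
have huv : p u v = 0 by apply: hu; rewrite !inE eqxx !orbT.
have huwv : p u (w ** v) = 0 by apply: hu; rewrite !inE eqxx !orbT.
have hnu0 : nrm u != 0 by apply/eqP => /aniso /eqP; apply/negP.
have [T [hT T1 Tw Tv Twv]] : exists T, [/\ iso T, T one = one, T w = w', T v = v' & T (w ** v) = w' ** v'].
  apply: W4 => //; first by rewrite /t hv1' hv1.
  by rewrite pC hvw' pC hvw.
have [phi [hphi pw pv pu]] : exists phi,
    [/\ automorphism mul phi, phi w = w', phi v = v' & phi u = T u].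
  apply: (@G_aut w v u w' v' (T u)) => //.
  - by rewrite -T1 (iso_p hT).
  - by rewrite -Tw (iso_p hT).
  - by rewrite -Tv (iso_p hT).
  - by rewrite -Twv (iso_p hT).
  - exact: hT.2.
by exists phi.
Qed.

Section Main.
Variable psi : V -> V.
Hypotheses (hpl : linear_map psi) (hp1 : psi one = one) (hpn : forall z, nrm (psi z) = nrm z).
Hypothesis hloc : forall z, exists phi, automorphism mul phi /\ psi z = phi z.

Let hiso : iso psi. Proof. by split. Qed.
Lemma pp x y : p (psi x) (psi y) = p x y. Proof. by rewrite /polar -(linD hpl) !hpn. Qed.
Lemma tpsi x : t (psi x) = t x. Proof. by rewrite /t -{1}hp1 pp. Qed.

Lemma aut_conj phi : automorphism mul phi -> forall x, phi (conj x) = conj (phi x).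
Proof.
move=> ha x; apply: lin_conj; [exact: aut_lin|exact: aut_one|by case: (aut_nt ha x)].
Qed.

Lemma caseS x y : Dl x != 0 -> ~ (exists a b, y = a *: one + b *: x) ->
  exists phi, [/\ automorphism mul phi, phi x = psi x & phi y = psi y].
Proof.
move=> hD hy.
pose al := (2 * nrm x * t y - t x * p y x) / Dl x.
pose be := (2 * p y x - t x * t y) / Dl x.
pose v := y - (al *: one + be *: x).
have hv1 : p v one = 0.
  rewrite /v pBl pDl !pZl p11 -/(t y) -/(t x) /al /be.
  by move: hD; rewrite /Dl => hD; field.
have hvx : p v x = 0.
  rewrite /v pBl pDl !pZl pxx (pC one x) -/(t x) /al /be.
  by move: hD; rewrite /Dl => hD; field.
have hv0 : nrm v != 0.
  apply/eqP => /aniso /eqP; rewrite subr_eq0 => /eqP hyv; apply: hy.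
  by exists al, be.
have [phi [ha px pv]] : exists phi, [/\ automorphism mul phi, phi x = psi x & phi v = psi v].
  apply: GQ => //; first [exact: tpsi | exact: hpn | by rewrite -hp1 pp | by rewrite pp].
exists phi; split => //.
have hl := aut_lin ha.
have hyv : y = v + (al *: one + be *: x) by rewrite /v subrK.
clearbody v; rewrite hyv.
by rewrite !(linD hl) !(linZ hl) (aut_one ha) px pv !(linD hpl) !(linZ hpl) hp1.
Qed.

Lemma four0 : (2%:R : F) = 0 -> (4%:R : F) = 0.
Proof. by move=> h; rewrite (_ : 4 = 2 * 2)%N // natrM h mul0r. Qed.

Lemma caseA x y : (2%:R : F) = 0 -> t x = 0 -> t y = 0 -> p x y != 0 -> x != 0 ->
  exists phi, [/\ automorphism mul phi, phi x = psi x & phi y = psi y].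
Proof.
move=> h2 htx hty hxy hx0.
have hnx : nrm x != 0 by apply/eqP => /aniso /eqP; apply/negP.
have htw : t (x ** y) = - p x y by rewrite TXY htx mul0r sub0r.
have hD : Dl (x ** y) != 0.
  by rewrite /Dl four0 // mul0r sub0r htw sqrrN oppr_eq0 expf_eq0 negb_and hxy orbT.

have [phi [ha pw px]] : exists phi,
    [/\ automorphism mul phi, phi (x ** y) = psi x ** psi y & phi x = psi x].
  apply: GQ => //; first [ by rewrite pxxy hty mulr0 | by rewrite !TXY !tpsi pp
    | by rewrite !nmul !hpn | by rewrite -hp1 pp | by rewrite pxxy tpsi hty mulr0
    | exact: hpn | by rewrite tpsi ].
exists phi; split => //.
have e1 := LM x y.
have e2 := LM (psi x) (psi y).
have := congr1 phi e1; rewrite (aut_mul ha) (aut_conj ha) px pw e2 (linZ (aut_lin ha)) hpn.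
by move/scalerI => ->.
Qed.

Lemma pu_wv w x y : t x = 0 -> t y = 0 -> p x y = 0 -> p w (x ** y) = 0 -> p y (w ** x) = 0.
Proof.
move=> htx hty hxy hw.
rewrite pC A2 pC.
have e : y ** conj x = x ** y.
  rewrite conjE htx scale0r sub0r mNr.
  have h := Q2 x y; rewrite htx hty hxy !scale0r !addr0 subr0 in h.
  by apply/eqP; rewrite eq_sym -subr_eq0 opprK h.
by rewrite e pC.
Qed.

Lemma not_scalar_nz x : ~ (exists a, x = a *: one) -> nrm x != 0.
Proof.
move=> hx; apply/eqP => /aniso hx0; apply: hx; exists 0; by rewrite hx0 scale0r.
Qed.

Lemma one_notin x y : t x = 0 -> ~ (exists a, x = a *: one) ->
  ~ (exists a b, y = a *: one + b *: x) -> one \notin <<[:: x; y; x ** y]>>%VS.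
Proof.
move=> htx hx hy; apply/negP => hone.
have [al [be [ga e]]] : exists al be ga, one = al *: x + be *: y + ga *: (x ** y).
  have := coord_span (hone : one \in <<[tuple x; y; x ** y]>>%VS).
  rewrite !big_ord_recl big_ord0 /= addr0 addrA => ->.
  by do 3 eexists.
have [hg|hg] := eqVneq ga 0.
  rewrite hg scale0r addr0 in e.
  have [hb|hb] := eqVneq be 0.
    rewrite hb scale0r addr0 in e.
    have [ha|ha] := eqVneq al 0.
      by move: one_neq0; rewrite e ha scale0r eqxx.
    apply: hx; exists al^-1; by rewrite e scalerA mulVf // scale1r.
  apply: hy; exists be^-1, (- (be^-1 * al)).
  apply: eq_polar => z; have := congr1 (fun v => p v z) e => /=.
  rewrite !(pDl, pZl, pNl) => ->; by field.
have exy : x ** y = ga^-1 *: one - (ga^-1 * al) *: x - (ga^-1 * be) *: y.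
  apply: eq_polar => z; have := congr1 (fun v => p v z) e => /=.
  rewrite !(pDl, pZl, pNl, pBl) => ->; by field.
set a := ga^-1 in exy; set b := - (ga^-1 * al) in exy; set c := - (ga^-1 * be) in exy.
have exy' : x ** y = a *: one + b *: x + c *: y by rewrite exy /b /c !scaleNr.
have hxx : x ** (x ** y) = - (nrm x *: y).
  by have := LM x y; rewrite conjE htx scale0r sub0r mNl => <-; rewrite opprK.
have sx : x ** x = - (nrm x *: one) by rewrite sqr htx scale0r sub0r.
have e2 : (c ^+ 2 + nrm x) *: y = - ((c * a - b * nrm x) *: one + (a + c * b) *: x).
  have h := hxx; rewrite {1}exy' !mDr !mZr m1r sx exy' in h; vsolve h.
have [hc|hc] := eqVneq (c ^+ 2 + nrm x) 0.
  apply: hx; exists (- c); apply/eqP; rewrite -subr_eq0 scaleNr opprK; apply/eqP/aniso.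
  by rewrite nD nZ n1 pZr -/(t x) htx mulr0 addr0 mulr1 addrC.
apply: hy; exists (- ((c ^+ 2 + nrm x)^-1 * (c * a - b * nrm x))), (- ((c ^+ 2 + nrm x)^-1 * (a + c * b))).
apply: eq_polar => z; have := congr1 (fun v => p v z) e2 => /=.
rewrite !(pDl, pZl, pNl) => h.
have hy' : p y z = (c ^+ 2 + nrm x)^-1 * (- ((c * a - b * nrm x) * p one z + (a + c * b) * p x z)).
  by rewrite -h mulrA mulVf // mul1r.
by rewrite hy'; field.
Qed.

Lemma caseB x y : (2%:R : F) = 0 -> t x = 0 -> t y = 0 -> p x y = 0 ->
  ~ (exists a, x = a *: one) -> ~ (exists a b, y = a *: one + b *: x) ->
  exists phi, [/\ automorphism mul phi, phi x = psi x & phi y = psi y].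
Proof.
move=> h2 htx hty hxy hx hy.
have [w [hw1 hw2]] := perpP (one_notin htx hx hy).
have wx : p w x = 0 by apply: hw1; apply: memv_span; rewrite !inE eqxx.
have wy : p w y = 0 by apply: hw1; apply: memv_span; rewrite !inE eqxx !orbT.
have wxy : p w (x ** y) = 0 by apply: hw1; apply: memv_span; rewrite !inE eqxx !orbT.
have [T [hT T1 Tx Ty Txy]] : exists T,
    [/\ iso T, T one = one, T x = psi x, T y = psi y & T (x ** y) = psi x ** psi y].
  by apply: W4; rewrite ?hpn ?tpsi ?pp.
have hnx := not_scalar_nz hx.
have hny : nrm y != 0.
  apply: not_scalar_nz => -[a ha]; apply: hy; exists a, 0; by rewrite scale0r addr0.
have [phi [ha pw px py]] : exists phi,
    [/\ automorphism mul phi, phi w = T w, phi x = psi x & phi y = psi y].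
  apply: G_aut => //; first [
      by rewrite /Dl four0 // mul0r sub0r oppr_eq0 expf_eq0 /=
    | by rewrite -/(t x) htx
    | by rewrite pC wx
    | by rewrite -/(t y) hty
    | by rewrite pC wy
    | by rewrite pC hxy
    | by apply: pu_wv
    | by rewrite /t -{1}T1 (iso_p hT)
    | exact: hT.2
    | by rewrite -/(t (psi x)) tpsi htx
    | by rewrite -Tx (iso_p hT) pC wx
    | exact: hpn
    | by rewrite -/(t (psi y)) tpsi hty
    | by rewrite -Ty (iso_p hT) pC wy
    | by rewrite pp pC hxy
    | by apply: pu_wv; rewrite ?tpsi ?pp // -Txy (iso_p hT)
    ].

by exists phi.
Qed.

Lemma Dl0_char x : Dl x = 0 -> ~ (exists a, x = a *: one) -> (2%:R : F) = 0 /\ t x = 0.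
Proof.
move=> hD hx.
have h2 : (2%:R : F) = 0.
  apply: NNPP => h2; apply: hx; exists (t x / 2%:R).
  have h2' : (2%:R : F) != 0 by apply/eqP.
  apply/eqP; rewrite -subr_eq0; apply/eqP/aniso.
  rewrite nD nN nZ n1 pNr pZr -/(t x).
  have hn : nrm x = t x ^+ 2 / 4%:R.
    have h4 : (4%:R : F) != 0 by rewrite (_ : 4 = 2 * 2)%N // natrM mulf_neq0.
    move: hD; rewrite /Dl => /eqP; rewrite subr_eq0 => /eqP <-.
    by field.
  rewrite hn; rewrite (_ : 4 = 2 * 2)%N // natrM; field.
  by rewrite h2' /= (_ : 4 = 2 * 2)%N // natrM mulf_neq0.
split => //; move: hD; rewrite /Dl four0 // mul0r sub0r => /eqP.
move=> h; have : (t x ^+ 2 == 0) by rewrite -oppr_eq0. by rewrite expf_eq0 /= => /eqP.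
Qed.

Lemma two_loc x y : exists phi, [/\ automorphism mul phi, psi x = phi x & psi y = phi y].
Proof.
suff [phi [h1 h2 h3]] : exists phi, [/\ automorphism mul phi, phi x = psi x & phi y = psi y].
  by exists phi.
case: (classic (exists a, x = a *: one)) => [[a ->]|hx].
  have [phi [hphi e]] := hloc y; exists phi; split => //.
  by rewrite (linZ hpl) hp1 (linZ (aut_lin hphi)) (aut_one hphi).
case: (classic (exists a b, y = a *: one + b *: x)) => [[a [b ->]]|hy].
  have [phi [hphi e]] := hloc x; exists phi; split => //.
  by rewrite (linD hpl) !(linZ hpl) hp1 (linD (aut_lin hphi)) !(linZ (aut_lin hphi)) (aut_one hphi) e.
have [hDx|hDx] := eqVneq (Dl x) 0; last exact: caseS.
have hxy : ~ (exists a b, x = a *: one + b *: y).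
  move=> [a [b e]]; have [hb|hb] := eqVneq b 0.
    by apply: hx; exists a; rewrite e hb scale0r addr0.
  apply: hy; exists (- (b^-1 * a)), b^-1.
  apply: eq_polar => z; rewrite e !(pDl, pZl, pNl); by field.
have [hDy|hDy] := eqVneq (Dl y) 0; last first.
  have [phi [hphi e1 e2]] := caseS hDy hxy; by exists phi.
have hy' : ~ (exists a, y = a *: one).
  by move=> [a ha]; apply: hy; exists a, 0; rewrite scale0r addr0.
have [h2 htx] := Dl0_char hDx hx.
have [_ hty] := Dl0_char hDy hy'.
have [hp|hp] := eqVneq (p x y) 0; last first.
  apply: caseA => //; apply/eqP => hx0; apply: hx; exists 0; by rewrite hx0 scale0r.
exact: caseB.
Qed.
End Main.

Lemma twoloc_lin Dm : two_local_automorphism mul Dm -> linear_map Dm.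
Proof.
move=> h a x y.
have hn z : nrm (Dm z) = nrm z.
  by have [phi [hphi -> _]] := h z z; case: (aut_nt hphi z).
have hp z1 z2 : p (Dm z1) (Dm z2) = p z1 z2.
  by have [phi [hphi -> ->]] := h z1 z2; apply: aut_p.
apply/eqP; rewrite -subr_eq0; apply/eqP/aniso.
rewrite nD nN nD nZ pNr pDr pZr pZl !hp !hn nD nZ !pDl !pZl !pxx (pC y x).
ring.
Qed.

End Cayley.

Theorem theorem4p5 (F : fieldType) (V : vectType F) (mul : V -> V -> V)
    (one : V) (n : V -> F) :
  division_cayley_algebra mul one n ->
  (forall psi : V -> V, local_automorphism mul psi -> two_local_automorphism mul psi) /\
  (forall D : V -> V, local_automorphism mul D <-> two_local_automorphism mul D).
Proof.
case=> [[[dim8 bil] unitP qf nmul nondeg] divis].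
have part1 : forall psi, local_automorphism mul psi -> two_local_automorphism mul psi.
  move=> psi [hl hloc].
  have hp1 : psi one = one.
    have [phi [hphi ->]] := hloc one.
    by apply: (aut_one unitP); apply: hphi.
  have hpn z : n (psi z) = n z.
    have [phi [hphi ->]] := hloc z.
    by case: (aut_nt bil unitP qf nmul nondeg dim8 hphi z).
  move=> x y; exact: (two_loc bil unitP qf nmul nondeg dim8 divis hl hp1 hpn hloc).
split => // D; split; first exact: part1.
move=> h; split; first exact: (twoloc_lin bil unitP qf nmul nondeg dim8 divis h).
by move=> x; have [phi [hphi e _]] := h x x; exists phi.
Qed.
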